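(* For all integers $c$, $n$, and $d$ with $n\ge 1$ and $d\ge 2$, there is a set $A$ of integers with $|A|=2n+2$ such that (i) $[c,c+n]\subseteq 2A$; (ii) $|x-y|\ge d$ for all $x,y\in 2A$ with $x\ne y$ and $x\notin[c,c+n]$; (iii) $\ell^{\sharp}_2(A)=n$.
   Context: For integers $a<b$, $[a,b]=\{j\in\mathbf{Z}: a\le j\le b\}$ is an interval of integers. $2A=\{a+a': a,a'\in A\}$. For a nonempty finite set $A\subseteq\mathbf{Z}$, $\ell^{\sharp}_2(A)$ is the largest integer $n\ge1$ such that $[c,c+n]\subseteq 2A$ for some $c\in\mathbf{Z}$ (undefined if $2A$ contains no interval). *)

(* Defs.v *)
(* integers Z, finite sets of integers as duplicate-free lists. *)
From Stdlib Require Import ZArith List.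
Open Scope Z_scope.

Definition in_sumset (A : list Z) (x : Z) : Prop :=
  exists a a', In a A /\ In a' A /\ x = a + a'.

Definition interval_in_sumset (A : list Z) (c n : Z) : Prop :=
  forall j, c <= j <= c + n -> in_sumset A j.

(* ell2sharp A n  <->  l^#_2(A) is defined and equals n, i.e. n >= 1 is the
   largest integer such that [c, c+n] \subseteq 2A for some c. *)
Definition ell2sharp_eq (A : list Z) (n : Z) : Prop :=
  1 <= n /\
  (exists c, interval_in_sumset A c n) /\
  (forall m c, 1 <= m -> interval_in_sumset A c m -> m <= n).

(* Main.v *)
Require Import Defs.
From Stdlib Require Import ZArith List Lia.
Open Scope Z_scope.

Definition Inv (c N d m : Z) (A : list Z) : Prop :=
  NoDup A /\ Z.of_nat (length A) = 2 * m /\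
  (forall j, c <= j <= c + m - 1 -> in_sumset A j) /\
  (forall x, in_sumset A x -> (c <= x <= c + m - 1) \/
     ((x < c - d \/ x > c + N + d) /\
      forall y, in_sumset A y -> x <> y -> d <= Z.abs (x - y))) /\
  (forall a a', In a A -> In a' A -> a <> a' -> d <= Z.abs (a - a')) /\
  (exists M, 0 <= M /\ forall a, In a A -> Z.abs a <= M).

Lemma Inv0 c N d : Inv c N d 0 nil.
Proof.
  repeat split.
  - constructor.
  - intros j Hj; lia.
  - intros x [a [b [Ha _]]]; destruct Ha.
  - intros a a' Ha; destruct Ha.
  - exists 0; split; [lia| intros a Ha; destruct Ha].
Qed.

Lemma Inv_step c N d m A : 0 <= m -> m <= N -> 2 <= d -> Inv c N d m A ->
  exists A', Inv c N d (m + 1) A'.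
Proof.
  intros Hm HmN Hd [H1 [H2 [H3 [H4 [H5 [M [HM0 HM]]]]]]].
  set (L := 3 * M + 3 * Z.abs c + 3 * N + 3 * d + 10).
  set (q := c + m - L).
  assert (H4' : forall a b a' b', In a A -> In b A -> In a' A -> In b' A ->
     (c <= a + b <= c + m - 1) \/ ((a + b < c - d \/ a + b > c + N + d) /\
       (a + b = a' + b' \/ d <= Z.abs (a + b - (a' + b'))))).
  { intros a b a' b' Ha Hb Ha' Hb'.
    destruct (H4 (a + b) (ex_intro _ a (ex_intro _ b (conj Ha (conj Hb eq_refl)))))
      as [Hi | [Hf Hs]]; [left; exact Hi | right; split; [exact Hf|]].
    destruct (Z.eq_dec (a + b) (a' + b')) as [e|ne]; [left; exact e| right].
    apply Hs; [exists a', b'; auto | exact ne]. }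
  assert (H5' : forall a a', In a A -> In a' A -> a = a' \/ d <= Z.abs (a - a')).
  { intros a a' Ha Ha'. destruct (Z.eq_dec a a'); [left; auto| right; auto]. }
  exists (L :: q :: A).
  split; [|split; [|split; [|split; [|split]]]].
  - constructor.
    + simpl; intros [e|Hin]; [unfold q, L in e; lia|].
      specialize (HM _ Hin); unfold L in HM; lia.
    + constructor; [|exact H1].
      intros Hin; specialize (HM _ Hin); unfold q, L in HM; lia.
  - simpl length. rewrite !Nat2Z.inj_succ. lia.
  - intros j Hj. destruct (Z.eq_dec j (c + m)) as [e|ne].
    + exists L, q; simpl; unfold q; split; [auto|split; [auto|lia]].
    + destruct (H3 j ltac:(lia)) as [a [b [Ha [Hb e]]]].
      exists a, b; simpl; auto.
  - intros x [a [b [Ha [Hb ->]]]].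
    simpl in Ha, Hb.
    destruct Ha as [<-|[<-|Ha]]; destruct Hb as [<-|[<-|Hb]];
    try (left; unfold q; lia);
    try (pose proof (HM _ Ha));
    try (pose proof (HM _ Hb));
    (match goal with
     | Ha : In a A, Hb : In b A |- _ =>
        destruct (H4 (a + b) (ex_intro _ a (ex_intro _ b (conj Ha (conj Hb eq_refl)))))
          as [Hi | [Hf _]]; [left; lia| right; split; [lia|]]
     | _ => right; split; [unfold q, L; lia|]
     end);
    intros y [a' [b' [Ha' [Hb' ->]]]] Hne;
    simpl in Ha', Hb';
    destruct Ha' as [<-|[<-|Ha']]; destruct Hb' as [<-|[<-|Hb']];
    try (pose proof (HM _ Ha'));
    try (pose proof (HM _ Hb'));
    unfold q, L in *;
    first
    [ solve [lia]
    | match goal with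
      | H : In ?u A, H' : In ?v A |- _ =>
          pose proof (H5' _ _ H H'); solve [lia]
      end
    | match goal with
      | Ha : In a A, Hb : In b A, Ha' : In a' A, Hb' : In b' A |- _ =>
          pose proof (H4' _ _ _ _ Ha Hb Ha' Hb'); solve [lia]
      end ].
  - intros a a' Ha Ha' Hne. simpl in Ha, Ha'.
    destruct Ha as [<-|[<-|Ha]]; destruct Ha' as [<-|[<-|Ha']];
    try (pose proof (HM _ Ha)); try (pose proof (HM _ Ha'));
    try (apply H5; assumption);
    unfold q, L in *; lia.
  - exists (L + Z.abs c + N); split; [unfold L; lia|].
    intros a Ha; simpl in Ha; destruct Ha as [<-|[<-|Ha]];
    try (pose proof (HM _ Ha)); unfold q, L in *; lia.
Qed.

Lemma Inv_all c N d (Hd : 2 <= d) : forall k : nat, Z.of_nat k <= N + 1 ->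
  exists A, Inv c N d (Z.of_nat k) A.
Proof.
  induction k as [|k IH]; intros Hk.
  - exists nil; apply Inv0.
  - destruct (IH ltac:(lia)) as [A HA].
    rewrite Nat2Z.inj_succ. apply (Inv_step c N d (Z.of_nat k) A); try lia; exact HA.
Qed.

Theorem mainTheorem4 (c n d : Z) (hn : 1 <= n) (hd : 2 <= d) :
  exists A : list Z,
    NoDup A /\ Z.of_nat (length A) = 2 * n + 2 /\
    interval_in_sumset A c n /\
    (forall x y, in_sumset A x -> in_sumset A y -> x <> y ->
       ~ (c <= x <= c + n) -> d <= Z.abs (x - y)) /\
    ell2sharp_eq A n.
Proof.
  destruct (Inv_all c n d hd (Z.to_nat (n + 1)) ltac:(lia)) as [A HA].
  rewrite Z2Nat.id in HA by lia.
  destruct HA as [H1 [H2 [H3 [H4 [H5 _]]]]].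
  exists A. split; [exact H1|]. split; [lia|].
  assert (Hsep : forall x y, in_sumset A x -> in_sumset A y -> x <> y ->
       ~ (c <= x <= c + n) -> d <= Z.abs (x - y)).
  { intros x y Hx Hy Hne Hni. destruct (H4 x Hx) as [Hi|[_ Hs]]; [lia|].
    apply Hs; auto. }
  split; [intros j Hj; apply H3; lia|].
  split; [exact Hsep|].
  split; [exact hn|]. split.
  - exists c; intros j Hj; apply H3; lia.
  - intros m c' Hm Hint.
    assert (A1 : c <= c').
    { destruct (Z_le_gt_dec c c') as [h|h]; [exact h|].
      assert (T := Hsep c' (c' + 1) (Hint c' ltac:(lia)) (Hint (c'+1) ltac:(lia)) ltac:(lia) ltac:(lia)).
      lia. }
    assert (A2 : c' + m <= c + n).
    { destruct (Z_le_gt_dec (c' + m) (c + n)) as [h|h]; [exact h|].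
      assert (T := Hsep (c' + m) (c' + m - 1) (Hint (c'+m) ltac:(lia)) (Hint (c'+m-1) ltac:(lia)) ltac:(lia) ltac:(lia)).
      lia. }
    lia.
Qed.
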